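(* Let $G$ be a graph with $n$ vertices and $m$ edges, and let $t(G)$ be its number of triangles. Then \[ 6n\,t(G)\geq \bigl(n+\lambda_n(G)\bigr)\sum_{u\in V(G)} d^2(u)-2nm\,\lambda_n(G), \] with equality if and only if $G$ is a complete multipartite graph (i.e. $V(G)$ can be partitioned into nonempty independent sets such that any two vertices in different sets are adjacent; a single part, i.e. an edgeless graph, is allowed).
   Context: All graphs are finite, simple and undirected. $d(u)$ denotes the degree of vertex $u$, and $t(G)$ the number of triangles (copies of $K_3$) in $G$. For a graph $G$ of order $n$, $L(G)=D(G)-A(G)$ is its Laplacian, where $A(G)$ is the adjacency matrix and $D(G)$ the diagonal degree matrix; its eigenvalues are $0=\lambda_1(G)\leq\dots\leq\lambda_n(G)$, so $\lambda_n(G)$ is the largest Laplacian eigenvalue. *)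

(* Defs.v *)
From mathcomp Require Import all_boot all_order all_algebra.
From mathcomp Require Import reals.
Set Implicit Arguments. Unset Strict Implicit. Unset Printing Implicit Defensive.
Import Order.TTheory GRing.Theory Num.Theory.
Local Open Scope ring_scope.

Definition simple_graph n (adj : rel 'I_n) : Prop :=
  symmetric adj /\ irreflexive adj.

Definition deg n (adj : rel 'I_n) (u : 'I_n) : nat := #|[set v | adj u v]|.

Definition cliques n (adj : rel 'I_n) (k : nat) : {set {set 'I_n}} :=
  [set S : {set 'I_n} | (#|S| == k) &&
     [forall u in S, forall v in S, (u != v) ==> adj u v]].

Definition num_edges n (adj : rel 'I_n) : nat := #|cliques adj 2|.
Definition num_triangles n (adj : rel 'I_n) : nat := #|cliques adj 3|.

Definition adj_mx (R : nzRingType) n (adj : rel 'I_n) : 'M[R]_n :=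
  \matrix_(i, j) (if adj i j then 1 else 0).
Definition deg_mx (R : nzRingType) n (adj : rel 'I_n) : 'M[R]_n :=
  \matrix_(i, j) (if i == j then (deg adj i)%:R else 0).
Definition laplacian (R : nzRingType) n (adj : rel 'I_n) : 'M[R]_n :=
  deg_mx R adj - adj_mx R adj.

Definition largest_eigenvalue (R : realType) n (M : 'M[R]_n) (lam : R) : Prop :=
  eigenvalue M lam /\ (forall mu, eigenvalue M mu -> mu <= lam).

Definition complete_multipartite n (adj : rel 'I_n) : Prop :=
  exists P : {set {set 'I_n}},
    partition P [set: 'I_n] /\
    forall u v, adj u v = (pblock P u != pblock P v).

(* Main.v *)
Require Import Defs.
From mathcomp Require Import all_boot all_order all_algebra.
From mathcomp Require Import reals.
From mathcomp Require Import complex ring lra.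
Set Implicit Arguments. Unset Strict Implicit. Unset Printing Implicit Defensive.

Section Count.
Variables (n : nat) (adj : rel 'I_n).
Hypothesis (asym : symmetric adj) (airr : irreflexive adj).

Lemma dcount (X : {set {set 'I_n}}) k :
  (forall S, S \in X -> #|S| = k) ->
  \sum_i #|[set S in X | i \in S]| = k * #|X|.
Proof.
move=> HX.
have e i : #|[set S in X | i \in S]| = \sum_(S in X) (i \in S).
  rewrite -sum1_card [RHS]big_mkcond [LHS]big_mkcond; apply: eq_bigr => S _.
  by rewrite inE; case: (S \in X); case: (i \in S).
under eq_bigr => i _ do rewrite e.
rewrite exchange_big /= (eq_bigr (fun=> k)) => [|S SX]; first by rewrite sum_nat_const mulnC.
rewrite -(HX S SX) -sum1_card [RHS]big_mkcond /=.
by apply: eq_bigr => i _; case: (i \in S).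
Qed.

Lemma inC2 S : (S \in cliques adj 2) = [exists x, exists y, adj x y && (S == [set x; y])].
Proof.
apply/idP/idP.
  rewrite inE => /andP [/cards2P [x [y [xy ->]]] /forallP H].
  apply/existsP; exists x; apply/existsP; exists y; rewrite eqxx andbT.
  have := H x; rewrite !inE eqxx /= => /forall_inP /(_ y).
  by rewrite !inE eqxx orbT => /(_ isT) /implyP; apply.
case/existsP => x /existsP [y /andP [axy /eqP ->]].
have xy : x != y by apply: contraTneq axy => ->; rewrite airr.
rewrite inE cards2 xy eqxx /=; apply/forallP => u; apply/implyP => /set2P Hu.
apply/forallP => v; apply/implyP => /set2P Hv; apply/implyP.
by case: Hu Hv => -> [] -> //; rewrite ?eqxx // asym.
Qed.

Lemma K1 (W : {set 'I_n}) :
  \sum_(i in W) #|[set j in W | adj i j]| =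
  2 * #|[set S in cliques adj 2 | S \subset W]|.
Proof.
set X := [set S in cliques adj 2 | S \subset W].
rewrite -(dcount (X := X)); last first.
  by move=> S; rewrite !inE => /andP [/andP [/eqP ->]].
rewrite [RHS](bigID (fun i => i \in W)) /= [X in _ = _ + X]big1 ?addn0; last first.
  move=> i iW; apply/eqP; rewrite cards_eq0; apply/eqP/setP => S; rewrite !inE.
  by apply/negbTE; apply: contra iW => /andP [/andP [_ /subsetP SW] /SW].
apply: eq_bigr => i iW.
have -> : [set S in X | i \in S] = [set [set i; j] | j in [set j in W | adj i j]].
  apply/setP => S; rewrite in_set [S \in X]in_set; apply/idP/imsetP.
    case/andP => /andP [SC SW] iS; move: SC; rewrite inC2.
    case/existsP => x /existsP [y /andP [axy /eqP Sxy]].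
    move: iS; rewrite Sxy => /set2P [] ix.
      exists y; last by rewrite ix.
      by rewrite !inE ix axy (subsetP SW) // Sxy !inE eqxx orbT.
    exists x; last by rewrite ix setUC.
    by rewrite !inE ix asym axy (subsetP SW) // Sxy !inE eqxx.
  case=> j; rewrite inE => /andP [jW aij] ->.
  rewrite inC2 !in_set !inE eqxx /= andbT; apply/andP; split.
    by apply/existsP; exists i; apply/existsP; exists j; rewrite aij eqxx.
  by apply/subsetP => u /set2P [] ->.
rewrite card_in_imset //.
move=> j1 j2; rewrite !inE => /andP [_ a1] /andP [_ a2] E.
have : j1 \in [set i; j2] by rewrite -E !inE eqxx orbT.
case/set2P => // ji; by rewrite ji airr in a1.
Qed.

Lemma clP (S : {set 'I_n}) :
  reflect (forall u v, u \in S -> v \in S -> u != v -> adj u v)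
    [forall u in S, forall v in S, (u != v) ==> adj u v].
Proof.
apply: (iffP forall_inP) => H.
  by move=> u v uS vS uv; have /forall_inP/(_ v vS)/implyP := H u uS; apply.
by move=> u uS; apply/forall_inP => v vS; apply/implyP; apply: H.
Qed.

Lemma inCk k S : (S \in cliques adj k) =
  (#|S| == k) && [forall u in S, forall v in S, (u != v) ==> adj u v].
Proof. by rewrite inE. Qed.

Definition Nb u := [set w | adj u w].

Lemma K3 u :
  #|[set S in cliques adj 3 | u \in S]| =
  #|[set T in cliques adj 2 | T \subset Nb u]|.
Proof.
have uN (T : {set 'I_n}) : T \subset Nb u -> u \notin T.
  by move=> TN; apply/negP => uT; have := subsetP TN u uT; rewrite inE airr.
have -> : [set S in cliques adj 3 | u \in S] =
   [set u |: T | T in [set T in cliques adj 2 | T \subset Nb u]].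
  apply/setP => S; rewrite in_set inCk; apply/idP/imsetP.
    case/andP => /andP [/eqP S3 /clP Scl] uS.
    exists (S :\ u); last by rewrite setD1K.
    rewrite in_set inCk -andbA; apply/and3P; split.
    - by have := cardsD1 u S; rewrite uS S3 add1n => -[<-].
    - apply/clP => a b; rewrite !inE => /andP [_ aS] /andP [_ bS]; exact: Scl.
    - apply/subsetP => w; rewrite !inE => /andP [wu wS].
      by apply: Scl => //; rewrite eq_sym.
  case=> T; rewrite in_set inCk => /andP [/andP [/eqP T2 /clP Tcl] TN] ->.
  have uT := uN T TN.
  rewrite setU11 andbT cardsU1 uT T2 eqxx /=; apply/clP => a b.
  rewrite !inE => /orP [/eqP -> | aT] /orP [/eqP -> | bT]; rewrite ?eqxx //.
  - by move=> _; have := subsetP TN b bT; rewrite inE.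
  - by move=> _; have := subsetP TN a aT; rewrite inE asym.
  - exact: Tcl.
rewrite card_in_imset //.
move=> T1 T2; rewrite !in_set => /andP [_ /uN u1] /andP [_ /uN u2] E.
by rewrite -(setU1K u1) E setU1K.
Qed.

Lemma Ktri : 6 * num_triangles adj =
  \sum_u \sum_(i in Nb u) #|[set j in Nb u | adj i j]|.
Proof.
rewrite (_ : 6 = 2 * 3) // -mulnA -(dcount (X := cliques adj 3)); last first.
  by move=> S; rewrite inCk => /andP [/eqP].
rewrite big_distrr /=; apply: eq_bigr => u _.
by rewrite K1 K3.
Qed.

Lemma Kedge : 2 * num_edges adj = \sum_u #|Nb u|.
Proof.
have := K1 setT.
rewrite (_ : [set S in cliques adj 2 | S \subset setT] = cliques adj 2); last first.
  by apply/setP => S; rewrite in_set subsetT andbT.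
move=> <-; rewrite [LHS]big_mkcond; apply: eq_bigr => u _; rewrite inE; apply: eq_card => w; by rewrite !inE.
Qed.

End Count.


Import Order.TTheory GRing.Theory Num.Theory.
Local Open Scope ring_scope.

Section SpecS.
Local Open Scope sesquilinear_scope.

Lemma tCmul (C : numClosedFieldType) m n p (A : 'M[C]_(m, n)) (B : 'M[C]_(n, p)) :
  (A *m B)^t* = B^t* *m A^t*.
Proof. by rewrite trmx_mul map_mxM. Qed.

Lemma herm_quad (C : numClosedFieldType) n (A : 'M[C]_n) (lam : C) :
  A \is hermsymmx ->
  (forall mu, eigenvalue A mu -> mu \is Num.real -> mu <= lam) ->
  forall x : 'rV[C]_n, (x *m A *m x^t* ) 0 0 <= lam * (x *m x^t* ) 0 0 /\
   ((x *m A *m x^t* ) 0 0 = lam * (x *m x^t* ) 0 0 -> x *m A = lam *: x).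
Proof.
move=> Ah Heig x.
have nA : A \is normalmx by exact: hermitian_normalmx.
have eA := orthomx_spectralP nA.
set P := spectralmx A in eA; set d := spectral_diag A in eA.
have uP : P \is unitarymx by exact: spectral_unitarymx.
have PPt : P *m P^t* = 1%:M by exact/unitarymxP.
have PtP : P^t* *m P = 1%:M by rewrite -invmx_unitary // mulVmx // spectral_unit.
rewrite invmx_unitary // in eA.
have dreal k : d 0 k \is Num.real.
  by have /mxOverP := hermitian_spectral_diag_real Ah; apply.
have dle k : d 0 k <= lam.
  apply: Heig (dreal k); apply/eigenvalueP; exists (row k P).
    rewrite eA -row_mul !mulmxA PPt mul1mx row_mul.
    apply/rowP => j; rewrite !mxE (bigD1 k) //= big1 ?addr0.
      by rewrite !mxE eqxx mulr1n mulrC.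
    by move=> i /negbTE ik; rewrite !mxE eq_sym ik mulr0n mul0r.
  apply/eqP => /(congr1 (fun v => v *m P^t* )); rewrite -row_mul PPt mul0mx.
  move/rowP/(_ k); rewrite !mxE eqxx /= => /eqP; by rewrite oner_eq0.
set y := x *m P^t*.
have xy : x = y *m P by rewrite /y -mulmxA PtP mulmx1.
have xt : x^t* = P^t* *m y^t* by rewrite {1}xy tCmul.
have e1 : x *m A *m x^t* = y *m diag_mx d *m y^t*.
  rewrite {1}xy xt eA !mulmxA -[y *m P *m P^t*]mulmxA PPt mulmx1.
  by rewrite -[y *m diag_mx d *m P *m P^t*]mulmxA PPt mulmx1.
have e2 : x *m x^t* = y *m y^t*.
  by rewrite {1}xy xt !mulmxA -[y *m P *m P^t*]mulmxA PPt mulmx1.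
have q1 : (y *m diag_mx d *m y^t*) 0 0 = \sum_k d 0 k * (y 0 k * (y 0 k)^*).
  rewrite mxE; apply: eq_bigr => k _; rewrite mul_mx_diag !mxE; ring.
have q2 : (y *m y^t*) 0 0 = \sum_k (y 0 k * (y 0 k)^*).
  by rewrite mxE; apply: eq_bigr => k _; rewrite !mxE.
have diff : lam * (y *m y^t*) 0 0 - (y *m diag_mx d *m y^t*) 0 0 =
   \sum_k (lam - d 0 k) * (y 0 k * (y 0 k)^*).
  rewrite q1 q2 mulr_sumr -sumrB; apply: eq_bigr => k _; ring.
have ge0 k : 0 <= (lam - d 0 k) * (y 0 k * (y 0 k)^*).
  by rewrite mulr_ge0 ?subr_ge0 ?mul_conjC_ge0.
rewrite e1 e2; split.
  have := @sumr_ge0 _ _ (index_enum _) xpredT _ (fun k _ => ge0 k).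
  by rewrite -diff subr_ge0.
move=> /eqP; rewrite eq_sym -subr_eq0 diff => /eqP /psumr_eq0P H.
have yd : y *m diag_mx d = lam *: y.
  rewrite mul_mx_diag; apply/rowP => k; rewrite [LHS]mxE [RHS]mxE.
  have /eqP := H (fun i _ => ge0 i) k isT; rewrite mulf_eq0 mul_conjC_eq0 subr_eq0.
  by case/orP => /eqP ->; rewrite ?mul0r ?mulr0 // mulrC.
by rewrite eA !mulmxA -/y yd -scalemxAl -xy.
Qed.

Lemma realC_real (R : realType) (r : R) : (r%:C)%C \is Num.real.
Proof. by rewrite realE !lecE /= eqxx /= le_total. Qed.

Lemma conjC_realC (R : realType) (r : R) : ((r%:C)%C)^* = (r%:C)%C.
Proof. exact/CrealP/realC_real. Qed.

Lemma sym_quad (R : realType) n (M : 'M[R]_n) (lam : R) :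
  M^T = M ->
  (forall mu, eigenvalue M mu -> mu <= lam) ->
  forall x : 'rV[R]_n, (x *m M *m x^T) 0 0 <= lam * (x *m x^T) 0 0 /\
   ((x *m M *m x^T) 0 0 = lam * (x *m x^T) 0 0 -> x *m M = lam *: x).
Proof.
move=> Msym Heig x.
pose f := real_complex R.
have tC m p (B : 'M[R]_(m, p)) : (map_mx f B)^t* = map_mx f B^T.
  by apply/matrixP => i j; rewrite !mxE conjC_realC.
have Ah : map_mx f M \is hermsymmx.
  apply: realsym_hermsym.
    apply/is_hermitianmxP; rewrite expr0 scale1r.
    by apply/matrixP => i j; rewrite !mxE -[in LHS]Msym mxE.
  by rewrite qualifE/=; apply/'forall_forallP => i j; rewrite mxE realC_real.
have Heig' : forall mu, eigenvalue (map_mx f M) mu -> mu \is Num.real -> mu <= (lam%:C)%C.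
  move=> mu emu /RRe_real rmu; rewrite -rmu lecR; apply: Heig.
  move: emu; rewrite -rmu !eigenvalue_root_char -map_char_poly.
  by rewrite (fmorph_root f).
have [H1 H2] := @herm_quad _ _ _ _ Ah Heig' (map_mx f x).
have eE m p (B : 'M[R]_(m, p)) i j : map_mx f B i j = f (B i j) by rewrite mxE.
rewrite tC -!map_mxM !eE in H1 H2.
rewrite -lecR rmorphM /=; split => // Heq.
apply: (map_mx_inj (f := f)); rewrite H2; last by rewrite Heq; exact: rmorphM.
by apply/matrixP => i j; rewrite !mxE rmorphM.
Qed.

End SpecS.

Section Main.
Variables (R : realType) (n : nat) (adj : rel 'I_n).
Hypothesis (asym : symmetric adj) (airr : irreflexive adj).

Let a u v : R := (adj u v)%:R.
Let dR u : R := (#|Nb adj u|)%:R.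
Let L := laplacian R adj.

Lemma card_sumR (A : {set 'I_n}) : (#|A|%:R : R) = \sum_j (j \in A)%:R.
Proof.
rewrite -sum1_card natr_sum [LHS]big_mkcond /=; apply: eq_bigr => j _.
by case: (j \in A).
Qed.

Lemma dRE u : dR u = \sum_v a u v.
Proof. by rewrite /dR card_sumR; apply: eq_bigr => v _; rewrite inE. Qed.

Lemma asymR u v : a u v = a v u. Proof. by rewrite /a asym. Qed.
Lemma aa u v : a u v * a u v = a u v. Proof. by rewrite /a; case: adj; rewrite ?mulr1 ?mulr0. Qed.
Lemma a_ge0 u v : 0 <= a u v. Proof. by rewrite /a ler0n. Qed.
Lemma a_le1 u v : a u v <= 1. Proof. by rewrite /a; case: adj. Qed.
Lemma avv v : a v v = 0. Proof. by rewrite /a airr. Qed.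

Lemma LE i j : L i j = (i == j)%:R * dR i - a i j.
Proof. by rewrite /L /laplacian !mxE /a /dR; case: (i == j); case: (adj i j); rewrite ?mul1r ?mul0r. Qed.

Lemma sum_delta (F : 'I_n -> R) j : \sum_i F i * (i == j)%:R = F j.
Proof.
rewrite (bigD1 j) //= eqxx mulr1 big1 ?addr0 // => i /negbTE ->; by rewrite mulr0.
Qed.

Lemma colsumL j : \sum_i L i j = 0.
Proof.
under eq_bigr => i _ do rewrite LE.
rewrite sumrB (eq_bigr (fun i => dR i * (i == j)%:R)); last by move=> i _; rewrite mulrC.
rewrite sum_delta dRE; apply/eqP; rewrite subr_eq0; apply/eqP; apply: eq_bigr => i _; exact: asymR.
Qed.

Lemma rowsumL i : \sum_j L i j = 0.
Proof.
rewrite -[RHS](colsumL i); apply: eq_bigr => j _; rewrite !LE asymR eq_sym.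
by case: eqP => [->|]; rewrite ?mul0r.
Qed.

Lemma Lsym : L^T = L.
Proof. apply/matrixP => i j; rewrite mxE !LE asymR eq_sym; by case: eqP => [->|]; rewrite ?mul0r. Qed.

Lemma quadE (x : 'rV[R]_n) : (x *m L *m x^T) 0 0 = \sum_j (\sum_i x 0 i * L i j) * x 0 j.
Proof. by rewrite mxE; apply: eq_bigr => j _; rewrite !mxE. Qed.

Lemma normE (x : 'rV[R]_n) : (x *m x^T) 0 0 = \sum_j x 0 j * x 0 j.
Proof. by rewrite mxE; apply: eq_bigr => j _; rewrite !mxE. Qed.

Definition xv v : 'rV[R]_n := \row_u (a v u - dR v / n%:R).
Definition cc v j := \sum_i a v i * a i j.

Lemma aL v j : \sum_i a v i * L i j = dR j * a v j - cc v j.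
Proof.
under eq_bigr => i _ do rewrite LE mulrBr.
rewrite sumrB (eq_bigr (fun i => (a v i * dR i) * (i == j)%:R)); last first.
  by move=> i _; ring.
by rewrite sum_delta mulrC.
Qed.

Lemma XL v j : \sum_i xv v 0 i * L i j = dR j * a v j - cc v j.
Proof.
under eq_bigr => i _ do rewrite mxE mulrBl.
by rewrite sumrB -big_distrr /= colsumL mulr0 subr0 aL.
Qed.

Lemma sumcc v : \sum_j cc v j = \sum_j dR j * a v j.
Proof.
rewrite /cc exchange_big /=; apply: eq_bigr => i _.
by rewrite dRE mulrC big_distrr.
Qed.

Lemma QE v : (xv v *m L *m (xv v)^T) 0 0 =
  \sum_j dR j * a v j - \sum_j cc v j * a v j.
Proof.
rewrite quadE.
under eq_bigr => j _ do rewrite XL mxE mulrBr.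
rewrite sumrB -big_distrl /= sumrB sumcc subrr mul0r subr0.
rewrite -sumrB; apply: eq_bigr => j _; rewrite mulrBl -mulrA aa; done.
Qed.

Lemma NE v : (xv v *m (xv v)^T) 0 0 =
  dR v - 2%:R * (dR v / n%:R) * dR v + n%:R * (dR v / n%:R) ^+ 2.
Proof.
rewrite normE.
under eq_bigr => j _ do rewrite mxE.
set k := dR v / n%:R.
transitivity (\sum_j (a v j * a v j - 2%:R * k * a v j + k ^+ 2)).
  by apply: eq_bigr => j _; ring.
under eq_bigr => j _ do rewrite aa.
rewrite big_split /= sumrB -big_distrr /= -dRE sumr_const card_ord. by rewrite [in X in _ = _ + X]mulr_natl.
Qed.

Lemma sumS : \sum_v \sum_j dR j * a v j = \sum_j dR j ^+ 2.
Proof.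
rewrite exchange_big /=; apply: eq_bigr => j _.
rewrite -big_distrr /= expr2; congr (_ * _); rewrite dRE.
by apply: eq_bigr => v _; rewrite asymR.
Qed.

Lemma sumT : \sum_v \sum_j cc v j * a v j = 6%:R * (num_triangles adj)%:R.
Proof.
rewrite -natrM Ktri // natr_sum; apply: eq_bigr => u _.
rewrite natr_sum [RHS]big_mkcond /= /cc.
under eq_bigr => j _ do rewrite big_distrl /=.
rewrite exchange_big /=; apply: eq_bigr => i _.
rewrite inE; rewrite -[adj u i]/(adj u i); case: ifP => aui; last first.
  by rewrite big1 // => j _; rewrite /a aui mul0r mul0r.
rewrite card_sumR; apply: eq_bigr => j _.
by rewrite !inE /a aui mul1r asym; case: (adj u j); case: (adj j i); rewrite ?mulr1 ?mulr0.
Qed.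

Lemma sumd : \sum_v dR v = 2%:R * (num_edges adj)%:R.
Proof. by rewrite -natrM Kedge // natr_sum. Qed.

Lemma SE : (((\sum_(u : 'I_n) (deg adj u) ^ 2)%N)%:R : R) = \sum_u dR u ^+ 2.
Proof. by rewrite natr_sum; apply: eq_bigr => u _; rewrite natrX. Qed.

Lemma eig_le_n mu : eigenvalue L mu -> mu <= n%:R.
Proof.
case/eigenvalueP => y yL y0.
have hj j : \sum_i y 0 i * L i j = mu * y 0 j.
  by have /rowP/(_ j) := yL; rewrite !mxE.
set s := \sum_j y 0 j.
set N2 := \sum_j y 0 j * y 0 j.
have ms : mu * s = 0.
  rewrite /s big_distrr /=; under eq_bigr => j _ do rewrite -hj.
  rewrite exchange_big /= big1 // => i _; by rewrite -big_distrr /= rowsumL mulr0.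
have Q : \sum_j (\sum_i y 0 i * L i j) * y 0 j = mu * N2.
  by rewrite /N2 big_distrr; apply: eq_bigr => j _; rewrite hj /= mulrA.
have QE2 : \sum_j (\sum_i y 0 i * L i j) * y 0 j =
   \sum_i \sum_j a i j * (y 0 i * y 0 i) - \sum_i \sum_j a i j * (y 0 i * y 0 j).
  rewrite -sumrB; under eq_bigr => j _ do rewrite big_distrl /=.
  rewrite exchange_big; apply: eq_bigr => i _.
  under eq_bigr => j _ do rewrite LE mulrBr mulrBl.
  rewrite !sumrB; congr (_ - _); last by apply: eq_bigr => j _; ring.
  rewrite -big_distrl /= -dRE (eq_bigr (fun j => (y 0 i * dR i * y 0 j) * (j == i)%:R)).
    by rewrite sum_delta; ring.
  by move=> j _; rewrite eq_sym; ring.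
pose b i j := 1 - a i j.
pose F i j := y 0 i * y 0 i - y 0 i * y 0 j.
have e1 : n%:R * N2 - s ^+ 2 - mu * N2 = \sum_i \sum_j b i j * F i j.
  rewrite -Q QE2 /N2 /s expr2 big_distrl /= big_distrr /=.
  rewrite -!sumrB; apply: eq_bigr => i _.
  have nc c : n%:R * c = \sum_(j < n) c by rewrite sumr_const card_ord mulr_natl.
  rewrite nc big_distrr /= -!sumrB.
  by apply: eq_bigr => j _; rewrite /b /F; ring.
have e2 : \sum_i \sum_j b i j * F i j = \sum_i \sum_j b i j * F j i.
  rewrite exchange_big /=; apply: eq_bigr => i _; apply: eq_bigr => j _.
  by rewrite /b asymR.
have X0 : 0 <= \sum_i \sum_j b i j * F i j.
  have : 0 <= \sum_i \sum_j b i j * F i j + \sum_i \sum_j b i j * F j i.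
    rewrite -big_split /=; apply: sumr_ge0 => i _; rewrite -big_split /=.
    apply: sumr_ge0 => j _; rewrite -mulrDr; apply: mulr_ge0.
      by rewrite /b subr_ge0 a_le1.
    rewrite /F (_ : y 0 i * y 0 i - y 0 i * y 0 j + (y 0 j * y 0 j - y 0 j * y 0 i) = (y 0 i - y 0 j) ^+ 2); last by ring.
    exact: sqr_ge0.
  by rewrite -e2; lra.
have key : mu * N2 <= n%:R * N2 - s ^+ 2 by move: X0; rewrite -e1; lra.
have N2ge0 : 0 <= N2 by apply: sumr_ge0 => j _; rewrite -expr2 sqr_ge0.
have N2gt0 : 0 < N2.
  rewrite lt_def N2ge0 andbT; apply/eqP => /psumr_eq0P H.
  move/eqP: y0; apply; apply/rowP => j; rewrite mxE.
  have := H (fun j _ => (ltac:(by rewrite -expr2 sqr_ge0) : 0 <= y 0 j * y 0 j)) j isT.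
  by move/eqP; rewrite mulf_eq0 orbb => /eqP.
have [mu0|mu0] := eqVneq mu 0; first by rewrite mu0 ler0n.
have s0 : s = 0 by move/eqP: ms; rewrite mulf_eq0 (negbTE mu0) => /eqP.
rewrite s0 expr0n /= subr0 in key.
by rewrite -(ler_pM2r N2gt0).
Qed.

Lemma xvL_entry (v : 'I_n) (mu : R) : xv v *m L = mu *: xv v ->
  forall j, dR j * a v j - cc v j = mu * (a v j - dR v / n%:R).
Proof.
move=> /rowP H j; have := H j; rewrite !mxE.
under eq_bigr => i _ do rewrite -[xv v 0 i]/((xv v) 0 i).
by rewrite XL.
Qed.

Lemma nonadj_sub (v j : 'I_n) (mu : R) : xv v *m L = mu *: xv v ->
  ~~ adj v j -> forall i, adj v i -> adj i j.
Proof.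
move=> H nvj.
have hv := xvL_entry H v; have hj := xvL_entry H j.
have ccv : cc v v = dR v.
  by rewrite /cc dRE; apply: eq_bigr => i _; rewrite (asymR i v) aa.
have avj : a v j = 0 by rewrite /a (negbTE nvj).
rewrite avv ccv mulr0 sub0r in hv.
rewrite avj mulr0 sub0r in hj.
have ccj : cc v j = dR v by move: hv hj; lra.
have S0 : \sum_i a v i * (1 - a i j) = 0.
  under eq_bigr => i _ do rewrite mulrBr mulr1.
  by rewrite sumrB -dRE -/(cc v j) ccj subrr.
move=> i avi.
move/psumr_eq0P: S0 => H0.
have := H0 (fun i _ => mulr_ge0 (a_ge0 v i) (ltac:(by rewrite subr_ge0 a_le1) : 0 <= 1 - a i j)) i isT.
rewrite /a avi mul1r; case: (adj i j) => //=; rewrite subr0 => /eqP; by rewrite oner_eq0.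
Qed.

Lemma multi_of_cond : (forall v j, ~~ adj v j -> forall i, adj v i -> adj i j) ->
  complete_multipartite adj.
Proof.
move=> Hc.
have Nbeq u v : (Nb adj u == Nb adj v) = ~~ adj u v.
  apply/eqP/idP => [E | nuv].
    apply/negP => auv; have : v \in Nb adj u by rewrite inE.
    by rewrite E inE airr.
  apply/setP => w; rewrite !inE; apply/idP/idP => Hw.
    by rewrite asym; apply: Hc nuv _ Hw.
  have nvu : ~~ adj v u by rewrite asym.
  by rewrite asym; apply: Hc nvu _ Hw.
exists (preim_partition (Nb adj) [set: 'I_n]); split; first exact: preim_partitionP.
move=> u v.
have Pp := preim_partitionP (Nb adj) [set: 'I_n].
case/and3P: (Pp) => /eqP cov triv _.
rewrite eq_pblock // ?cov ?inE //.
rewrite /preim_partition pblock_equivalence_partition ?inE //.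
  by rewrite Nbeq negbK.
by move=> x y z _ _ _ /=; split => // /eqP ->.
Qed.

Lemma cond_of_multi : complete_multipartite adj ->
  forall v i j, ~~ adj i j -> adj v i = adj v j.
Proof. by case=> P [_ HP] v i j; rewrite !HP => /negPn /eqP e; rewrite e. Qed.

Lemma xvL_n : (0 < n)%N -> (forall v i j, ~~ adj i j -> adj v i = adj v j) ->
  forall v, xv v *m L = n%:R *: xv v.
Proof.
move=> hn Hc v; apply/rowP => j; rewrite !mxE.
under eq_bigr => i _ do rewrite -[xv v 0 i]/((xv v) 0 i).
rewrite XL.
have e : dR v - cc v j = a v j * (n%:R - dR j).
  rewrite dRE /cc -sumrB.
  have nc : n%:R = \sum_(i < n) (1 : R) by rewrite sumr_const card_ord.
  rewrite nc (_ : dR j = \sum_i a i j); last first.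
    by rewrite dRE; apply: eq_bigr => i _; rewrite asymR.
  rewrite -sumrB big_distrr /=; apply: eq_bigr => i _.
  rewrite /a; case aij: (adj i j); first by rewrite /=; ring.
  by rewrite (Hc v i j) ?aij // /=; ring.
have n0 : n%:R != 0 :> R by rewrite pnatr_eq0 -lt0n.
have -> : cc v j = dR v - a v j * (n%:R - dR j) by rewrite -e; ring.
by field.
Qed.

Lemma main_sec (lam : R) : eigenvalue L lam -> (forall mu, eigenvalue L mu -> mu <= lam) ->
  let m := num_edges adj in
  let t := num_triangles adj in
  let S := (\sum_(u : 'I_n) (deg adj u) ^ 2)%N in
  ((n%:R + lam) * S%:R - 2%:R * n%:R * m%:R * lam <= 6%:R * n%:R * t%:R) /\
  ((6%:R * n%:R * t%:R = (n%:R + lam) * S%:R - 2%:R * n%:R * m%:R * lam)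
     <-> complete_multipartite adj).
Proof.
move=> lamE lamMax m t S.
rewrite SE.
have eS := sumS; have eT := sumT; have eD := sumd.
rewrite -/m in eD; rewrite -/t in eT.
set Sr := \sum_u dR u ^+ 2 in eS *.
have [n0|hn] := posnP n.
  have Z (F : 'I_n -> R) : \sum_u F u = 0.
    by apply: big1 => u _; have := leq_trans (ltn_ord u) (eq_leq n0); rewrite ltn0.
  have S0 : Sr = 0 by apply: Z.
  have m0 : (m%:R : R) = 0 by move: eD; rewrite Z => /esym/eqP; rewrite mulf_eq0 pnatr_eq0 /= => /eqP.
  have t0 : (t%:R : R) = 0 by move: eT; rewrite Z => /esym/eqP; rewrite mulf_eq0 pnatr_eq0 /= => /eqP.
  rewrite S0 m0 t0 !mulr0 !mul0r subr0; split => //; split => // _.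
  apply: multi_of_cond => v; have := leq_trans (ltn_ord v) (eq_leq n0); by rewrite ltn0.
have n0 : n%:R != 0 :> R by rewrite pnatr_eq0 -lt0n.
have ngt0 : 0 < n%:R :> R by rewrite ltr0n.
pose Q v := (xv v *m L *m (xv v)^T) 0 0.
pose N v := (xv v *m (xv v)^T) 0 0.
have eQ : \sum_v Q v = Sr - 6%:R * t%:R.
  by rewrite /Q; under eq_bigr => v _ do rewrite QE; rewrite sumrB eS eT.
have eN : n%:R * \sum_v N v = 2%:R * n%:R * m%:R - Sr.
  rewrite /N; under eq_bigr => v _ do rewrite NE.
  rewrite big_distrr /= (eq_bigr (fun v => n%:R * dR v - dR v ^+ 2)); last first.
    by move=> v _; field.
  by rewrite sumrB -big_distrr /= eD -/Sr; ring.
have Hq v := @sym_quad _ _ _ _ Lsym lamMax (xv v).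
have ineq : \sum_v Q v <= lam * \sum_v N v.
  by rewrite big_distrr /=; apply: ler_sum => v _; case: (Hq v).
have ineq2 : n%:R * (Sr - 6%:R * t%:R) <= lam * (2%:R * n%:R * m%:R - Sr).
  by rewrite -eQ -eN mulrCA; apply: ler_wpM2l => //; apply: ltW.
split; first by move: ineq2; nra.
split.
  move=> Heq.
  have e0 : lam * \sum_v N v - \sum_v Q v = 0.
    apply/eqP; rewrite -(mulrI_eq0 _ (lregP n0)); apply/eqP.
    rewrite mulrBr mulrCA eN eQ; move: Heq; nra.
  move: e0; rewrite big_distrr -sumrB /= => /psumr_eq0P H.
  apply: multi_of_cond => v j nvj.
  apply: (@nonadj_sub v j lam) => //.
  case: (Hq v) => h1; apply.
  apply/eqP; rewrite eq_sym -subr_eq0; apply/eqP; apply: H => // w _.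
  by case: (Hq w) => h _; rewrite subr_ge0.
move=> /cond_of_multi Hc.
have HL := xvL_n hn Hc.
have QN v : Q v = n%:R * N v by rewrite /Q HL -scalemxAl mxE.
have eQN : Sr - 6%:R * t%:R = 2%:R * n%:R * m%:R - Sr.
  by rewrite -eQ -eN big_distrr; apply: eq_bigr => v _; rewrite QN.
have [N0|N0] := eqVneq (\sum_v N v) 0.
  have h1 : 2%:R * n%:R * m%:R = Sr by move: eN; rewrite N0 mulr0 => /eqP; rewrite eq_sym subr_eq0 => /eqP.
  have h2 : Sr = 6%:R * t%:R by move: eQN; rewrite h1 subrr => /eqP; rewrite subr_eq0 => /eqP.
  rewrite (_ : _ - _ = n%:R * Sr + lam * (Sr - 2%:R * n%:R * m%:R)); last by ring.
  by rewrite h1 subrr mulr0 addr0 h2; ring.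
have [v Nv] : exists v, N v != 0.
  apply/existsP; apply: contraNT N0 => /existsPn H.
  by apply/eqP; apply: big1 => v _; apply/eqP; have := H v; rewrite negbK.
have ev : eigenvalue L n%:R.
  apply/eigenvalueP; exists (xv v) => //.
  by apply: contra Nv => /eqP x0; rewrite /N x0 mul0mx mxE.
have lamn : lam = n%:R by apply/eqP; rewrite eq_le lamMax // eig_le_n.
rewrite lamn.
have : n%:R * (Sr - 6%:R * t%:R) = n%:R * (2%:R * n%:R * m%:R - Sr) by rewrite eQN.
move=> h; apply/eqP; rewrite -subr_eq0; apply/eqP.
by rewrite (_ : _ - _ = - (n%:R * (Sr - 6%:R * t%:R) - n%:R * (2%:R * n%:R * m%:R - Sr))); [rewrite h subrr oppr0 | ring].
Qed.

End Main.


Unset Implicit Arguments.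

Theorem theorem2 (R : realType) (n : nat) (adj : rel 'I_n) (lam : R) :
  simple_graph adj ->
  largest_eigenvalue (laplacian R adj) lam ->
  let m := num_edges adj in
  let t := num_triangles adj in
  let S := (\sum_(u : 'I_n) (deg adj u) ^ 2)%N in
  ((n%:R + lam) * S%:R - 2%:R * n%:R * m%:R * lam <= 6%:R * n%:R * t%:R) /\
  ((6%:R * n%:R * t%:R = (n%:R + lam) * S%:R - 2%:R * n%:R * m%:R * lam)
     <-> complete_multipartite adj).
Proof.
move=> [asym airr] [lamE lamMax].
exact: (main_sec asym airr lamE lamMax).
Qed.
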